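(* Let $\Gamma$ be a finitely generated infinite group, $\{\Gamma_n\}$ a sequence of finite-index normal subgroups with $\bigcap_n\bigcup_{i\ge n}\Gamma_i=\{e\}$, $\pi_n:\Gamma\to\Gamma/\Gamma_n$ the quotient maps, and $S\subset\Gamma\setminus\{e\}$ a finite symmetric generating set. For every finite $A\subset\Gamma$ there is a finite $B\subset\Gamma$ with $A\subset B$ such that for all sufficiently large $n$, the set $(\Gamma/\Gamma_n)\setminus\pi_n(B)$ is connected in the Cayley graph $C(\Gamma/\Gamma_n,\pi_n(S))$.
   Context: $C(\Gamma/\Gamma_n,\pi_n(S))$ has vertex set $\Gamma/\Gamma_n$ and edges $\{g\Gamma_n,gs\Gamma_n\}$ for $g\in\Gamma,s\in S$. A vertex subset is connected if its induced subgraph (all edges with both endpoints in the set) is connected. *)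

(* Defs.v *)
From Stdlib Require Import List Relations Arith.
Import ListNotations.

Section Groups.
Context {G : Type} (mul : G -> G -> G) (inv : G -> G) (e : G).

Definition is_group : Prop :=
  (forall x y z, mul x (mul y z) = mul (mul x y) z) /\
  (forall x, mul e x = x) /\ (forall x, mul x e = x) /\
  (forall x, mul (inv x) x = e) /\ (forall x, mul x (inv x) = e).

Definition infinite_carrier : Prop := ~ exists l : list G, forall g, In g l.

Definition normal_subgroup (H : G -> Prop) : Prop :=
  H e /\ (forall x y, H x -> H y -> H (mul x y)) /\ (forall x, H x -> H (inv x)) /\
  (forall x g, H x -> H (mul (inv g) (mul x g))).

Definition finite_index (H : G -> Prop) : Prop :=
  exists reps : list G, forall g, exists r, In r reps /\ H (mul (inv r) g).

Definition word_prod (w : list G) : G := fold_right mul e w.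

Definition sym_gen_set (S : list G) : Prop :=
  (forall s, In s S -> s <> e) /\
  (forall s, In s S -> In (inv s) S) /\
  (forall g, exists w : list G, (forall s, In s w -> In s S) /\ word_prod w = g).

Definition same_coset (H : G -> Prop) (g h : G) : Prop := H (mul (inv g) h).

Definition outside_image (H : G -> Prop) (B : list G) (g : G) : Prop :=
  forall b, In b B -> ~ same_coset H g b.

(* One step in the Cayley graph C(G/H, pi(S)) restricted to vertices satisfying P,
   working on representatives: either the same vertex (same coset), or
   hH = g s H for some s in S (an edge {gH, gsH}). *)
Definition quot_step (H : G -> Prop) (S : list G) (P : G -> Prop) (g h : G) : Prop :=
  P g /\ P h /\
  (same_coset H g h \/ exists s, In s S /\ same_coset H (mul g s) h).

(* The vertex set {gH | P g} (P invariant under cosets) induces a connected subgraph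
   of C(G/H, pi(S)). *)
Definition quot_connected (H : G -> Prop) (S : list G) (P : G -> Prop) : Prop :=
  forall g h, P g -> P h -> clos_refl_trans G (quot_step H S P) g h.

End Groups.

(* Main.v *)
Require Import Defs.
From Stdlib Require Import List Relations Arith Lia Classical ClassicalEpsilon.
Import ListNotations.

Section Gen.
Context {X : Type}.

Definition restr (R : relation X) (P : X -> Prop) (a b : X) : Prop := P a /\ P b /\ R a b.

Lemma crt_mono (R1 R2 : relation X) : (forall a b, R1 a b -> R2 a b) ->
  forall a b, clos_refl_trans X R1 a b -> clos_refl_trans X R2 a b.
Proof. intros HR a b H; induction H; [apply rt_step; auto | apply rt_refl | eapply rt_trans; eauto]. Qed.

Lemma crt_sym (R : relation X) : (forall a b, R a b -> R b a) ->
  forall a b, clos_refl_trans X R a b -> clos_refl_trans X R b a.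
Proof. intros HR a b H; induction H; [apply rt_step; auto | apply rt_refl | eapply rt_trans; eauto]. Qed.

Lemma crt_restr_pres (R : relation X) (P : X -> Prop) a b :
  clos_refl_trans X (restr R P) a b -> P a -> P b.
Proof. intros H; induction H; intros; auto. destruct H as (_&?&_); auto. Qed.

Lemma crt_exit (R : relation X) (P : X -> Prop) a b : clos_refl_trans X R a b -> P a -> ~ P b ->
  exists p q, clos_refl_trans X (restr R P) a p /\ R p q /\ P p /\ ~ P q.
Proof.
  intros H; apply clos_rt_rt1n in H; induction H; intros Pa Pb.
  - contradiction.
  - destruct (classic (P y)) as [Py|Py].
    + destruct (IHclos_refl_trans_1n Py Pb) as (p&q&H1&H2&H3&H4).
      exists p, q; split; [|auto]. apply rt_trans with y; [apply rt_step; split; [exact Pa| split; [exact Py| exact H]] | exact H1].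
    + exists x, y; repeat split; auto. apply rt_refl.
Qed.

Lemma crt_restr_mono (R : relation X) (P P' : X -> Prop) a b :
  clos_refl_trans X (restr R P) a b ->
  (forall w, clos_refl_trans X (restr R P) a w -> P' w) -> clos_refl_trans X (restr R P') a b.
Proof.
  intros H; apply clos_rt_rtn1 in H; induction H; intros Hw.
  - apply rt_refl.
  - eapply rt_trans; [apply IHclos_refl_trans_n1; intros; apply Hw; assumption| ].
    apply rt_step. destruct H as (Hy&Hz&Hr). split; [|split; [|exact Hr]]; apply Hw.
    + apply clos_rtn1_rt; exact H0.
    + eapply rt_trans; [apply clos_rtn1_rt; exact H0| apply rt_step; split; [|split]; assumption].
Qed.

Lemma crt_restr_weak (R : relation X) (P P' : X -> Prop) a b :
  (forall w, P w -> P' w) ->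
  clos_refl_trans X (restr R P) a b -> clos_refl_trans X (restr R P') a b.
Proof. intros HP; apply crt_mono. intros x y (?&?&?); repeat split; auto. Qed.

Definition decb (Q : Prop) : bool := if excluded_middle_informative Q then true else false.
Lemma decb_true Q : decb Q = true <-> Q.
Proof. unfold decb; destruct (excluded_middle_informative Q); split; congruence || tauto. Qed.

Lemma count_lt (l : list X) (f g : X -> bool) :
  (forall a, In a l -> f a = true -> g a = true) ->
  (exists a, In a l /\ g a = true /\ f a = false) ->
  length (filter f l) < length (filter g l).
Proof.
  induction l as [|x l IH]; intros Hfg (a&Ha&Hg&Hf); [destruct Ha|].
  assert (Hle : forall l', (forall a, In a l' -> f a = true -> g a = true) -> length (filter f l') <= length (filter g l')).
  { induction l' as [|y l' IH']; simpl; intros H; [lia|].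
    destruct (f y) eqn:E1; [rewrite (H y (or_introl eq_refl) E1); simpl; specialize (IH' (fun a h => H a (or_intror h))); lia|].
    destruct (g y); simpl; specialize (IH' (fun a h => H a (or_intror h))); lia. }
  simpl. destruct Ha as [<-|Ha].
  - rewrite Hg, Hf; simpl. specialize (Hle l (fun a h => Hfg a (or_intror h))); lia.
  - assert (IH' := IH (fun a h => Hfg a (or_intror h)) (ex_intro _ a (conj Ha (conj Hg Hf)))).
    destruct (f x) eqn:E1; [rewrite (Hfg x (or_introl eq_refl) E1); simpl; lia|].
    destruct (g x); simpl; lia.
Qed.

End Gen.

Section Main.
Context {G : Type} (mul : G -> G -> G) (inv : G -> G) (e : G) (Hgrp : is_group mul inv e).
Local Notation "x ** y" := (mul x y) (at level 40, left associativity).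

Lemma mul_assoc x y z : x ** (y ** z) = x ** y ** z. Proof. apply Hgrp. Qed.
Lemma id_l x : e ** x = x. Proof. apply Hgrp. Qed.
Lemma id_r x : x ** e = x. Proof. apply Hgrp. Qed.
Lemma inv_l x : inv x ** x = e. Proof. apply Hgrp. Qed.
Lemma inv_r x : x ** inv x = e. Proof. apply Hgrp. Qed.
Lemma cancel1 a b : inv a ** (a ** b) = b. Proof. rewrite mul_assoc, inv_l, id_l; auto. Qed.
Lemma cancel2 a b : a ** (inv a ** b) = b. Proof. rewrite mul_assoc, inv_r, id_l; auto. Qed.
Lemma inv_mul a b : inv (a ** b) = inv b ** inv a.
Proof.
  transitivity (inv (a ** b) ** ((a ** b) ** (inv b ** inv a))).
  - rewrite <- (mul_assoc a b), cancel2, inv_r, id_r. reflexivity.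
  - rewrite cancel1. reflexivity.
Qed.
Lemma inv_inv a : inv (inv a) = a.
Proof. transitivity (inv (inv a) ** (inv a ** a)); [rewrite inv_l, id_r | rewrite cancel1]; reflexivity. Qed.
Lemma inv_e : inv e = e. Proof. rewrite <- (id_l (inv e)). apply inv_r. Qed.

Ltac gs := repeat (first [rewrite inv_mul | rewrite inv_inv | rewrite inv_e | rewrite <- mul_assoc
  | rewrite cancel1 | rewrite cancel2 | rewrite inv_l | rewrite inv_r | rewrite id_l | rewrite id_r]).
Ltac gsh X := repeat (first [rewrite inv_mul in X | rewrite inv_inv in X | rewrite inv_e in X | rewrite <- mul_assoc in X
  | rewrite cancel1 in X | rewrite cancel2 in X | rewrite inv_l in X | rewrite inv_r in X | rewrite id_l in X | rewrite id_r in X]).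

Lemma mul_eq_e a b : inv a ** b = e -> a = b.
Proof. intro H. rewrite <- (cancel2 a b), H, id_r. reflexivity. Qed.

Context (S : list G) (HSsym : forall s, In s S -> In (inv s) S).

Definition qstep (H : G -> Prop) (g h : G) : Prop :=
  same_coset mul inv H g h \/ exists s, In s S /\ same_coset mul inv H (g ** s) h.
Definition inImg (H : G -> Prop) (K : list G) (g : G) : Prop :=
  exists b, In b K /\ same_coset mul inv H g b.

Section QS.
Context (H : G -> Prop) (Hn : normal_subgroup mul inv e H).
Local Notation sc := (same_coset mul inv H).
Local Notation P K := (outside_image mul inv H K).
Local Notation reach K := (clos_refl_trans G (restr (qstep H) (P K))).

Lemma He : H e. Proof. apply Hn. Qed.
Lemma Hmul x y : H x -> H y -> H (x ** y). Proof. apply Hn. Qed.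
Lemma Hinv x : H x -> H (inv x). Proof. apply Hn. Qed.
Lemma Hconj x g : H x -> H (inv g ** (x ** g)). Proof. apply Hn. Qed.

Lemma sc_refl g : sc g g. Proof. unfold same_coset. rewrite inv_l. apply He. Qed.
Lemma sc_sym g h : sc g h -> sc h g.
Proof. unfold same_coset; intro X. apply Hinv in X. gsh X; gs. exact X. Qed.
Lemma sc_trans g h k : sc g h -> sc h k -> sc g k.
Proof. unfold same_coset; intros X Y. assert (Z := Hmul _ _ X Y). gsh Z; gs. exact Z. Qed.
Lemma sc_transl c a b : sc (c ** a) (c ** b) <-> sc a b.
Proof. unfold same_coset. gs. tauto. Qed.
Lemma sc_eq g h : g = h -> sc g h. Proof. intros ->; apply sc_refl. Qed.
Lemma sc_right x b b' : sc (x ** b) b' -> sc x (b' ** inv b).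
Proof. unfold same_coset; intro X. assert (Z := Hconj _ (inv b) X). gsh Z; gs. exact Z. Qed.
Lemma sc_edge_sym g s h : sc (g ** s) h -> sc (h ** inv s) g.
Proof. intro X. apply sc_sym in X. unfold same_coset in *.
  assert (Z := Hconj _ (inv s) X). gsh Z; gs. exact Z. Qed.

Lemma qstep_sym g h : qstep H g h -> qstep H h g.
Proof.
  intros [X|(s&Hs&X)]; [left; apply sc_sym; auto|right; exists (inv s); split; auto].
  apply sc_edge_sym; auto.
Qed.

Lemma P_sc K g g' : sc g g' -> P K g -> P K g'.
Proof. intros X Y b Hb Z. apply (Y b Hb). eapply sc_trans; eauto. Qed.

Lemma notP_inImg K g : ~ P K g -> inImg H K g.
Proof. intro X. apply NNPP; intro Y. apply X. intros b Hb Z. apply Y. exists b; auto. Qed.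

Lemma reach_sym (Q : G -> Prop) a b : clos_refl_trans G (restr (qstep H) Q) a b ->
  clos_refl_trans G (restr (qstep H) Q) b a.
Proof. apply crt_sym. intros x y (?&?&?); repeat split; auto. apply qstep_sym; auto. Qed.

Lemma reach_sc (Q : G -> Prop) a b : Q a -> Q b -> sc a b -> clos_refl_trans G (restr (qstep H) Q) a b.
Proof. intros; apply rt_step; repeat split; auto. left; auto. Qed.

Lemma qstep_transl c a b : qstep H a b -> qstep H (c ** a) (c ** b).
Proof.
  intros [X|(s&Hs&X)]; [left; apply sc_transl; auto|right; exists s; split; auto].
  rewrite <- mul_assoc. apply sc_transl; auto.
Qed.

Lemma reach_transl (Q1 Q2 : G -> Prop) c a b : (forall g, Q1 g -> Q2 (c ** g)) ->
  clos_refl_trans G (restr (qstep H) Q1) a b -> clos_refl_trans G (restr (qstep H) Q2) (c ** a) (c ** b).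
Proof.
  intros HQ X; induction X as [x y (?&?&?)| |]; [apply rt_step; repeat split; auto; apply qstep_transl; auto
   | apply rt_refl | eapply rt_trans; eauto].
Qed.


Section LB.
Context (B : list G) (Be : In e B)
  (R1 : forall b, In b B -> clos_refl_trans G (restr (qstep H) (inImg H B)) b e)
  (R2 : forall x, P B x -> exists v, reach B x v /\
          forall b b', In b B -> In b' B -> ~ sc (v ** b) b').
Context (Qconn : forall a b, clos_refl_trans G (qstep H) a b).

Local Notation T t := (map (mul t) B).

Lemma inImg_T t g : inImg H B g -> inImg H (T t) (t ** g).
Proof. intros (b&Hb&X). exists (t ** b); split; [apply in_map; auto| apply sc_transl; auto]. Qed.

Lemma P_T t g : P B g -> P (T t) (t ** g).
Proof. intros X b Hb Y. apply in_map_iff in Hb as (b0&<-&Hb0). apply (X b0 Hb0). apply sc_transl in Y; auto. Qed.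

Lemma P_Tinv t g : P (T t) g -> P B (inv t ** g).
Proof. intros X b Hb Y. apply (X (t ** b)); [apply in_map; auto|].
  apply (sc_transl t) in Y. rewrite cancel2 in Y. exact Y. Qed.

Lemma R1t t b : In b B -> clos_refl_trans G (restr (qstep H) (inImg H (T t))) (t ** b) t.
Proof. intro Hb. pose proof (reach_transl (inImg H B) (inImg H (T t)) t b e (inImg_T t) (R1 b Hb)) as X.
  rewrite id_r in X. exact X. Qed.

Lemma R2t t x : P (T t) x -> exists v, reach (T t) x v /\
   forall b b', In b B -> In b' B -> ~ sc (v ** b) (t ** b').
Proof.
  intro X. destruct (R2 _ (P_Tinv _ _ X)) as (v0&Hr&Hd). exists (t ** v0). split.
  - pose proof (reach_transl (P B) (P (T t)) t _ _ (P_T t) Hr) as Y. rewrite cancel2 in Y. exact Y.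
  - intros b b' Hb Hb' Y. apply (Hd b b' Hb Hb'). rewrite <- mul_assoc in Y. apply sc_transl in Y; auto.
Qed.

Lemma notP_self t : ~ P (T t) t.
Proof. intro X. apply (X (t ** e)); [apply in_map; auto| apply sc_eq; rewrite id_r; auto]. Qed.

Lemma inImg_notP K g : inImg H K g -> ~ P K g.
Proof. intros (b&Hb&X) Y. apply (Y b Hb X). Qed.

Lemma keyL t x y : P (T t) x -> P (T t) y -> ~ reach (T t) x y ->
  exists v w, P (T v) w /\ P (T v) t /\ ~ reach (T v) w t /\
    (forall u, reach (T v) w u -> reach (T t) x u) /\ reach (T t) x v /\ ~ reach (T v) w v.
Proof.
  intros Px Py Nxy.
  destruct (R2t t x Px) as (v&Hxv&Hd).
  assert (D1 : forall g, inImg H (T v) g -> P (T t) g).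
  { intros g (b1&Hb1&X) b2 Hb2 Y. apply in_map_iff in Hb1 as (b&<-&Hb). apply in_map_iff in Hb2 as (b'&<-&Hb').
    apply (Hd b b' Hb Hb'). eapply sc_trans; [apply sc_sym, X| exact Y]. }
  assert (D2 : forall g, inImg H (T t) g -> P (T v) g).
  { intros g (b1&Hb1&X) b2 Hb2 Y. apply in_map_iff in Hb1 as (b'&<-&Hb'). apply in_map_iff in Hb2 as (b&<-&Hb).
    apply (Hd b b' Hb Hb'). eapply sc_trans; [apply sc_sym, Y| exact X]. }
  assert (S3 : forall g, inImg H (T v) g -> reach (T t) x g).
  { intros g Hg. destruct Hg as (b1&Hb1&X). pose proof Hb1 as Hb1'.
    apply in_map_iff in Hb1 as (b&<-&Hb).
    apply rt_trans with v; [exact Hxv|]. apply rt_trans with (v ** b).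
    - apply reach_sym. apply crt_restr_weak with (P := inImg H (T v)); [exact D1| apply R1t; auto].
    - apply reach_sym, reach_sc; [apply D1; exists (v**b); auto | apply D1; exists (v ** b); split; [auto| apply sc_refl]| exact X]. }
  assert (S4 : forall z, P (T t) z -> ~ reach (T t) x z -> clos_refl_trans G (restr (qstep H) (P (T v))) z t).
  { intros z Pz Nz.
    destruct (crt_exit _ (P (T t)) z t (Qconn z t) Pz (notP_self t)) as (u&u'&Hzu&Huu'&Pu&Pu').
    assert (HPv : forall w, reach (T t) z w -> P (T v) w).
    { intros w Hw. apply NNPP; intro Y. apply notP_inImg in Y. apply Nz.
      apply rt_trans with w; [apply S3, Y| apply reach_sym, Hw]. }
    assert (Hzu' : clos_refl_trans G (restr (qstep H) (P (T v))) z u).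
    { apply crt_restr_mono with (P := P (T t)); auto. }
    apply notP_inImg in Pu'. destruct Pu' as (b1&Hb1&X).
    pose proof Hb1 as Hb1'. apply in_map_iff in Hb1 as (b&<-&Hb).
    apply rt_trans with u; [exact Hzu'|]. apply rt_trans with u'.
    - apply rt_step. split; [|split; [|exact Huu']].
      + apply HPv, Hzu.
      + apply D2. exists (t ** b); auto.
    - eapply rt_trans; [apply reach_sc; [apply D2; exists (t**b); auto| apply D2; exists (t**b); split; auto; apply sc_refl| exact X]|].
      apply crt_restr_weak with (P := inImg H (T t)); [exact D2| apply R1t; auto]. }
  set (c := v ** inv t).
  assert (Ptv : forall g, P (T t) g -> P (T v) (c ** g)).
  { intros g X b1 Hb1 Y. apply in_map_iff in Hb1 as (b&<-&Hb). apply (X (t ** b)); [apply in_map; auto|].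
    apply (sc_transl c). replace (c ** (t ** b)) with (v ** b); auto. unfold c. gs. reflexivity. }
  assert (Pvt : forall g, P (T v) g -> P (T t) (inv c ** g)).
  { intros g X b1 Hb1 Y. apply in_map_iff in Hb1 as (b&<-&Hb). apply (X (v ** b)); [apply in_map; auto|].
    apply (sc_transl (inv c)). replace (inv c ** (v ** b)) with (t ** b); auto. unfold c. gs. reflexivity. }
  assert (Ncxy : ~ reach (T v) (c ** x) (c ** y)).
  { intro X. apply Nxy. rewrite <- (cancel1 c x), <- (cancel1 c y).
    apply reach_transl with (Q1 := P (T v)); auto. }
  assert (Pvt0 : P (T v) t). { apply D2. exists (t ** e); split; [apply in_map; auto| apply sc_eq; rewrite id_r; auto]. }
  assert (Hw : exists w, P (T v) w /\ ~ reach (T v) w t).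
  { destruct (classic (reach (T v) t (c ** x))) as [X|X].
    - exists (c ** y); split; [apply Ptv; auto|]. intro Y. apply Ncxy.
      apply rt_trans with t; [apply reach_sym, X| apply reach_sym, Y].
    - exists (c ** x); split; [apply Ptv; auto|]. intro Y; apply X, reach_sym, Y. }
  destruct Hw as (w&Pw&Nw).
  exists v, w. split; [auto|split; [auto|split; [auto|split; [|split; [auto|]]]]].
  - intros u Hu. assert (Pu : P (T v) u) by (eapply crt_restr_pres; eauto).
    destruct (classic (P (T t) u)) as [Ptu|Ptu].
    + apply NNPP; intro Y. apply Nw. apply rt_trans with u; [exact Hu| apply S4; auto].
    + exfalso. apply notP_inImg in Ptu. destruct Ptu as (b1&Hb1&X). pose proof Hb1 as Hb1'.
      apply in_map_iff in Hb1 as (b&<-&Hb). apply Nw. apply rt_trans with u; [exact Hu|].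
      apply rt_trans with (t ** b); [apply reach_sc; [auto| apply D2; exists (t**b); split; [auto|apply sc_refl]| exact X]|].
      apply crt_restr_weak with (P := inImg H (T t)); [exact D2| apply R1t; auto].
  - intro X. assert (Pv : P (T v) v) by (eapply crt_restr_pres; eauto). apply (notP_self v Pv).
Qed.


Context (reps : list G) (Hreps : forall g, exists r, In r reps /\ H (inv r ** g)).
Definition mu t x := length (filter (fun r => decb (reach (T t) x r)) reps).

Lemma no_split m : forall t x y, mu t x <= m -> P (T t) x -> P (T t) y -> ~ reach (T t) x y -> False.
Proof.
  induction m as [|m IH]; intros t x y Hm Px Py Nxy;
  destruct (keyL t x y Px Py Nxy) as (v&w&Pw&Pt&Nwt&Hsub&Hxv&Nwv);
  assert (Hlt : mu v w < mu t x).
  1,3: (unfold mu; apply count_lt;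
    [ intros a _ Ha; cbv beta in Ha |- *; apply (proj2 (decb_true _)); apply (proj1 (decb_true _)) in Ha; apply Hsub; exact Ha
    | destruct (Hreps v) as (r&Hr&Hvr); exists r; split; [exact Hr|]; split;
      [ cbv beta; apply (proj2 (decb_true _)); apply rt_trans with v; [exact Hxv|]; apply reach_sc;
        [ eapply crt_restr_pres; [exact Hxv| exact Px]
        | apply (P_sc _ v); [apply sc_sym; exact Hvr| eapply crt_restr_pres; [exact Hxv| exact Px]]
        | apply sc_sym; exact Hvr ]
      | cbv beta; destruct (decb (reach (T v) w r)) eqn:E; [|reflexivity]; exfalso;
        apply (proj1 (decb_true _)) in E; apply (notP_self v); apply (P_sc _ r); [exact Hvr| eapply crt_restr_pres; [exact E| exact Pw]] ] ]).
  - lia.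
  - apply (IH v w t); auto. lia.
Qed.

Lemma map_e : map (mul e) B = B.
Proof. rewrite (map_ext (mul e) (fun x => x)); [apply map_id| apply id_l]. Qed.

Lemma qconn_B : forall g h, P B g -> P B h -> reach B g h.
Proof.
  intros g h Pg Ph. apply NNPP; intro N. apply (no_split (mu e g) e g h); [lia| rewrite map_e; auto ..].
Qed.

End LB.

End QS.

Section Gam.
Context (HSgen : forall g, exists w, (forall s, In s w -> In s S) /\ word_prod mul e w = g).

Definition gR (a b : G) : Prop := exists s, In s S /\ b = a ** s.
Lemma gR_sym a b : gR a b -> gR b a.
Proof. intros (s&Hs&->). exists (inv s); split; auto. gs. reflexivity. Qed.

Lemma gstep_sym (Q : G -> Prop) a b : clos_refl_trans G (restr gR Q) a b -> clos_refl_trans G (restr gR Q) b a.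
Proof. apply crt_sym. intros x y (?&?&?); repeat split; auto. apply gR_sym; auto. Qed.

Lemma Gconn_word w : (forall s, In s w -> In s S) -> forall a, clos_refl_trans G gR a (a ** word_prod mul e w).
Proof.
  induction w as [|s w IH]; intros Hw a; simpl.
  - rewrite id_r. apply rt_refl.
  - rewrite mul_assoc. apply rt_trans with (a ** s); [apply rt_step; exists s; split; [apply Hw; left; auto| reflexivity]|].
    apply IH. intros; apply Hw; right; auto.
Qed.

Lemma Gconn a b : clos_refl_trans G gR a b.
Proof. destruct (HSgen (inv a ** b)) as (w&Hw&Hp). rewrite <- (cancel2 a b), <- Hp. apply Gconn_word; auto. Qed.

Fixpoint ball (k : nat) : list G :=
  match k with 0 => [e] | Datatypes.S k => ball k ++ flat_map (fun b => map (mul b) S) (ball k) end.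

Lemma ball_mono k m : k <= m -> incl (ball k) (ball m).
Proof. induction 1; [apply incl_refl| intros x Hx; simpl; apply in_or_app; left; auto]. Qed.

Lemma ball_e k : In e (ball k). Proof. apply (ball_mono 0 k); [lia| left; auto]. Qed.

Lemma ball_word w : (forall s, In s w -> In s S) -> forall k g, In g (ball k) -> In (g ** word_prod mul e w) (ball (k + length w)).
Proof.
  induction w as [|s w IH]; intros Hw k g Hg; simpl.
  - rewrite id_r, Nat.add_0_r; auto.
  - rewrite mul_assoc. replace (k + Datatypes.S (length w)) with (Datatypes.S k + length w) by lia.
    apply IH; [intros; apply Hw; right; auto|]. simpl. apply in_or_app; right.
    apply in_flat_map. exists g; split; auto. apply in_map; apply Hw; left; auto.
Qed.

Lemma ball_A (A : list G) : exists r, incl A (ball r).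
Proof.
  induction A as [|a A (r&Hr)]; [exists 0; intros x []|].
  destruct (HSgen a) as (w&Hw&Hp). exists (r + length w). intros x [<-|Hx].
  - apply (ball_mono (0 + length w)); [lia|]. rewrite <- Hp, <- (id_l (word_prod mul e w)). apply ball_word; auto. left; auto.
  - apply (ball_mono r); [lia| auto].
Qed.

Lemma ball_conn k : forall b, In b (ball k) -> clos_refl_trans G (restr gR (fun g => In g (ball k))) e b.
Proof.
  induction k as [|k IH]; intros b Hb.
  - destruct Hb as [<-|[]]. apply rt_refl.
  - assert (Hm : forall b, In b (ball k) -> In b (ball (Datatypes.S k))) by (apply ball_mono; lia).
    simpl in Hb. apply in_app_or in Hb as [Hb|Hb].
    + eapply crt_restr_weak; [exact Hm| apply IH; auto].
    + apply in_flat_map in Hb as (c&Hc&Hb). apply in_map_iff in Hb as (s&<-&Hs).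
      apply rt_trans with c; [eapply crt_restr_weak; [exact Hm| apply IH; auto]|].
      apply rt_step. split; [apply Hm; auto| split; [|exists s; auto]].
      simpl. apply in_or_app; right. apply in_flat_map. exists c; split; auto. apply in_map; auto.
Qed.

Section B0.
Context (B0 : list G) (B0e : In e B0)
  (B0conn : forall b, In b B0 -> clos_refl_trans G (restr gR (fun g => In g B0)) e b).
Local Notation avoid0 := (fun g => ~ In g B0).
Local Notation reach0 := (clos_refl_trans G (restr gR avoid0)).
Definition trapped (x : G) : Prop := exists W : list G, forall y, reach0 x y -> In y W.
Definition trap_list (x : G) : list G :=
  match excluded_middle_informative (trapped x) with
  | left h => filter (fun y => decb (reach0 x y)) (proj1_sig (constructive_indefinite_description _ h))
  | right _ => [] end.
Definition Bd : list G := flat_map (fun b => map (mul b) S) B0.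
Definition Fl : list G := flat_map trap_list Bd.
Definition Bf : list G := B0 ++ Fl.

Lemma In_trap_list x y : In y (trap_list x) <-> trapped x /\ reach0 x y.
Proof.
  unfold trap_list. destruct (excluded_middle_informative (trapped x)) as [h|h].
  - destruct (constructive_indefinite_description _ h) as (W&HW); simpl.
    rewrite filter_In. split.
    + intros (_&Hd). split; auto. apply (proj1 (decb_true _)); exact Hd.
    + intros (_&Hr). split; [apply HW; auto| apply (proj2 (decb_true _)); exact Hr].
  - simpl. split; [intros []| intros (?&_); contradiction].
Qed.

Lemma In_Fl y : In y Fl <-> exists b, In b Bd /\ trapped b /\ reach0 b y.
Proof.
  unfold Fl. rewrite in_flat_map. split.
  - intros (b&Hb&Hy). apply In_trap_list in Hy. exists b; tauto.
  - intros (b&Hb&Ht&Hr). exists b; split; auto. apply In_trap_list; auto.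
Qed.

Lemma to_Bd x : ~ In x B0 -> exists b, In b Bd /\ reach0 b x.
Proof.
  intro Hx. destruct (crt_exit gR avoid0 x e (Gconn x e) Hx (fun h => h B0e)) as (p&q&Hxp&(s&Hs&->)&Pp&Pq).
  exists p. split; [|apply gstep_sym; exact Hxp].
  apply NNPP in Pq. unfold Bd. apply in_flat_map. exists (p ** s); split; auto.
  apply in_map_iff. exists (inv s); split; [gs; reflexivity| apply HSsym; auto].
Qed.

Lemma Bf_conn b : In b Bf -> clos_refl_trans G (restr gR (fun g => In g Bf)) e b.
Proof.
  intro Hb. assert (Hm : forall g, In g B0 -> In g Bf) by (intros; apply in_or_app; auto).
  apply in_app_or in Hb as [Hb|Hb]; [eapply crt_restr_weak; [exact Hm| auto]|].
  apply In_Fl in Hb as (c&Hc&Ht&Hr).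
  assert (HcF : forall y, reach0 c y -> In y Bf).
  { intros y Hy. apply in_or_app; right. apply In_Fl. exists c; auto. }
  unfold Bd in Hc. apply in_flat_map in Hc as (a&Ha&Hc). apply in_map_iff in Hc as (s&<-&Hs).
  apply rt_trans with a; [eapply crt_restr_weak; [exact Hm| auto]|].
  apply rt_trans with (a ** s).
  - apply rt_step. split; [auto| split; [apply HcF, rt_refl| exists s; auto]].
  - eapply crt_restr_weak with (P := fun g => reach0 (a ** s) g); [exact HcF|].
    apply crt_restr_mono with (P := avoid0); auto.
Qed.

Lemma Bf_escape w : ~ In w Bf -> forall W : list G, exists y, ~ In y W /\ clos_refl_trans G (restr gR (fun g => ~ In g Bf)) w y.
Proof.
  intros Hw W.
  assert (Hw0 : ~ In w B0) by (intro; apply Hw, in_or_app; auto).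
  destruct (to_Bd w Hw0) as (b&Hb&Hbw).
  assert (Nb : ~ trapped b).
  { intro Ht. apply Hw, in_or_app; right. apply In_Fl. exists b; auto. }
  assert (Nw : ~ trapped w).
  { intros (W'&HW). apply Nb. exists W'. intros y Hy. apply HW. apply rt_trans with b; [apply gstep_sym; auto| auto]. }
  destruct (classic (exists y, reach0 w y /\ ~ In y W)) as [(y&Hy&HyW)|N].
  - exists y; split; auto. apply crt_restr_mono with (P := avoid0); auto.
    intros z Hz HzF. apply in_app_or in HzF as [HzF|HzF].
    + apply (crt_restr_pres _ _ _ _ Hz Hw0 HzF).
    + apply In_Fl in HzF as (c&Hc&Hct&Hcz). apply Hw, in_or_app; right. apply In_Fl.
      exists c; split; auto; split; auto. apply rt_trans with z; [auto| apply gstep_sym; auto].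
  - exfalso. apply Nw. exists W. intros y Hy. apply NNPP; intro; apply N; exists y; auto.
Qed.

End B0.

Definition Wl (B : list G) : list G := flat_map (fun b => map (fun b' => b' ** inv b) B) B.
Definition WSl (B : list G) : list G := flat_map (fun p => map (mul p) S) (Wl B).
Definition El (B : list G) : list G :=
  flat_map (fun p => map (fun b => inv p ** b) B) (Wl B) ++
  flat_map (fun q => flat_map (fun b => map (fun b' => inv (q ** b) ** b') B) B) (WSl B).

Lemma In_Wl B b b' : In b B -> In b' B -> In (b' ** inv b) (Wl B).
Proof. intros. apply in_flat_map. exists b; split; auto. apply in_map_iff; exists b'; auto. Qed.

Lemma R2_for (B : list G) (Be : In e B)
  (Hesc : forall w, ~ In w B -> forall W : list G, exists y, ~ In y W /\ clos_refl_trans G (restr gR (fun g => ~ In g B)) w y)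
  (H : G -> Prop) (Hn : normal_subgroup mul inv e H)
  (Hinj : forall g, In g (El B) -> g <> e -> ~ H g) :
  forall x, outside_image mul inv H B x -> exists v,
    clos_refl_trans G (restr (qstep H) (outside_image mul inv H B)) x v /\
    forall b b', In b B -> In b' B -> ~ same_coset mul inv H (v ** b) b'.
Proof.
  intros x Px.
  assert (PW : forall g, In g (Wl B) -> ~ In g B -> outside_image mul inv H B g).
  { intros g Hg HgB b Hb X. apply (Hinj (inv g ** b)); [| |exact X].
    - apply in_or_app; left. apply in_flat_map. exists g; split; auto. apply in_map; auto.
    - intro E. apply mul_eq_e in E. subst; auto. }
  destruct (classic (exists w, In w (Wl B) /\ same_coset mul inv H x w)) as [(w&HwW&Hxw)|N].
  - assert (HwB : ~ In w B) by (intro X; apply (Px w X Hxw)).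
    destruct (Hesc w HwB (Wl B)) as (y&HyW&Hwy).
    destruct (crt_exit _ (fun g => In g (Wl B)) w y Hwy HwW HyW) as (p&q&Hwp&(Hp1&Hq1&(s&Hs&->))&HpW&HqW).
    assert (HqS : In (p ** s) (WSl B)).
    { apply in_flat_map. exists p; split; auto. apply in_map; auto. }
    assert (HE2 : forall b b', In b B -> In b' B -> In (inv (p ** s ** b) ** b') (El B)).
    { intros b b' Hb Hb'. apply in_or_app; right. apply in_flat_map. exists (p ** s); split; auto.
      apply in_flat_map. exists b; split; auto. apply in_map; auto. }
    assert (Pq : outside_image mul inv H B (p ** s)).
    { intros b' Hb' X. apply (Hinj (inv (p ** s ** e) ** b')); [apply HE2; auto| |].
      - intro E. apply mul_eq_e in E. rewrite id_r in E. subst; auto.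
      - rewrite id_r. exact X. }
    exists (p ** s). split.
    + apply rt_trans with w; [apply reach_sc; auto; apply (P_sc H Hn _ x); auto|].
      apply rt_trans with p.
      * eapply crt_mono; [|exact Hwp]. intros a b (Ha&Hb&(Ha'&Hb'&(s'&Hs'&->))).
        split; [apply PW; auto| split; [apply PW; auto| right; exists s'; split; auto; apply sc_refl; auto]].
      * apply rt_step. split; [apply PW; auto| split; [auto| right; exists s; split; auto; apply sc_refl; auto]].
    + intros b b' Hb Hb' X. apply (Hinj _ (HE2 b b' Hb Hb')); [|exact X].
      intro E. apply mul_eq_e in E. apply HqW. replace (p ** s) with (b' ** inv b) by (rewrite <- E; gs; reflexivity).
      apply In_Wl; auto.
  - exists x. split; [apply rt_refl|]. intros b b' Hb Hb' X. apply N. exists (b' ** inv b).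
    split; [apply In_Wl; auto| apply sc_right; auto].
Qed.

Lemma Qconn_all (H : G -> Prop) (Hn : normal_subgroup mul inv e H) a b : clos_refl_trans G (qstep H) a b.
Proof. eapply crt_mono; [|apply Gconn]. intros x y (s&Hs&->). right. exists s; split; auto. apply sc_refl; auto. Qed.

Lemma R1_for (B : list G) (H : G -> Prop) (Hn : normal_subgroup mul inv e H)
  (Hc : forall b, In b B -> clos_refl_trans G (restr gR (fun g => In g B)) e b) :
  forall b, In b B -> clos_refl_trans G (restr (qstep H) (inImg H B)) b e.
Proof.
  intros b Hb. apply reach_sym; auto. eapply crt_mono; [|apply Hc; auto].
  intros x y (Hx&Hy&(s&Hs&->)). split; [exists x; split; auto; apply sc_refl; auto|].
  split; [exists (x ** s); split; auto; apply sc_refl; auto| right; exists s; split; auto; apply sc_refl; auto].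
Qed.

End Gam.

End Main.

Lemma threshold {G : Type} (e : G) (Gam : nat -> G -> Prop)
  (Hlim : forall g, (forall n, exists i, n <= i /\ Gam i g) <-> g = e) :
  forall L : list G, exists N, forall n, N <= n -> forall g, In g L -> g <> e -> ~ Gam n g.
Proof.
  induction L as [|a L (N&HN)]; [exists 0; intros n _ g []|].
  destruct (classic (a = e)) as [Ea|Ea].
  - exists N. intros n Hn g [<-|Hg] Hge; [contradiction| apply HN; auto].
  - assert (X : ~ (forall n, exists i, n <= i /\ Gam i a)) by (intro X; apply Ea, Hlim, X).
    apply not_all_ex_not in X as (M&HM).
    exists (N + M). intros n Hn g [<-|Hg] Hge.
    + intro Y. apply HM. exists n; split; [lia| auto].
    + apply HN; auto; lia.
Qed.

Theorem lemma5p3 (G : Type) (mul : G -> G -> G) (inv : G -> G) (e : G)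
  (Hgrp : is_group mul inv e)
  (Hinf : @infinite_carrier G)
  (Gam : nat -> G -> Prop)
  (Hnorm : forall n, normal_subgroup mul inv e (Gam n))
  (Hfin : forall n, finite_index mul inv (Gam n))
  (Hlim : forall g, (forall n, exists i, n <= i /\ Gam i g) <-> g = e)
  (S : list G) (HS : sym_gen_set mul inv e S)
  (A : list G) :
  exists B : list G, incl A B /\
    exists N, forall n, N <= n ->
      quot_connected mul inv (Gam n) S (outside_image mul inv (Gam n) B).
Proof.
  destruct HS as (_&HSsym&HSgen).
  destruct (ball_A mul inv e Hgrp S HSgen A) as (r&Hr).
  set (B0 := ball mul e S r).
  assert (B0e : In e B0) by (apply ball_e).
  set (B := Bf mul S B0).
  assert (Bsub : incl B0 B) by (intros x Hx; apply in_or_app; auto).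
  exists B. split; [intros x Hx; apply Bsub, Hr, Hx|].
  destruct (threshold e Gam Hlim (El mul inv S B)) as (N&HN).
  exists N. intros n Hn.
  destruct (Hfin n) as (reps&Hreps).
  intros g h Pg Ph.
  apply (qconn_B mul inv e Hgrp S HSsym (Gam n) (Hnorm n) B (Bsub _ B0e)
    (R1_for mul inv e Hgrp S HSsym B (Gam n) (Hnorm n) (Bf_conn mul e S B0 (ball_conn mul e S r)))
    (R2_for mul inv e Hgrp S B (Bsub _ B0e) (Bf_escape mul inv e Hgrp S HSsym HSgen B0 B0e) (Gam n) (Hnorm n) (HN n Hn))
    (Qconn_all mul inv e Hgrp S HSgen (Gam n) (Hnorm n))
    reps Hreps g h Pg Ph).
Qed.
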